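(* For $i\in\{1,2\}$, let $G_i$ be a 2-edge-connected $(3,4)$-biregular $X_i,Y_i$-bigraph (vertices of $X_i$ of degree 3, of $Y_i$ of degree 4), with $G_1,G_2$ vertex-disjoint, having a $P_7$-factor $F_i$, and choose an edge $e_i=a_ib_i\in E(G_i)\setminus E(F_i)$ with $a_i\in X_i$, $b_i\in Y_i$. Let $G$ be the graph obtained from the disjoint union $G_1\cup G_2$ by deleting $e_1$ and $e_2$ and adding the edges $e_1'=a_1b_2$ and $e_2'=a_2b_1$, so that $G$ is a $(3,4)$-biregular $(X_1\cup X_2),(Y_1\cup Y_2)$-bigraph. If $G_1$ has no full 3-regular subgraph, then $G$ is a 2-edge-connected $(3,4)$-biregular bigraph having a $P_7$-factor but no full 3-regular subgraph.
   Context: Graphs may have multiple edges. An $X,Y$-bigraph is a bipartite graph with partite sets $X$ and $Y$. A $(3,4)$-biregular bigraph is a bipartite graph in which every vertex of one part has degree 3 and every vertex of the other part has degree 4. A $P_7$-factor is a spanning subgraph each of whose components is a path on 7 vertices. A full 3-regular subgraph of a $(3,4)$-biregular bigraph is a 3-regular subgraph that contains every vertex of degree 4. *)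

(* Defs.v *)
From mathcomp Require Import all_boot.
Set Implicit Arguments. Unset Strict Implicit. Unset Printing Implicit Defensive.

(* Parallel edges are
   allowed (E is an arbitrary finite type of edge names). *)
Record bigraph := BiGraph {
  bX : finType; bY : finType; bE : finType;
  bex : bE -> bX; bey : bE -> bY }.

Definition vtx (G : bigraph) : finType := (bX G + bY G)%type.

Definition incid (G : bigraph) (e : bE G) (v : vtx G) : bool :=
  (inl (bex e) == v) || (inr (bey e) == v).

Definition joins (G : bigraph) (e : bE G) (u v : vtx G) : bool :=
  ((inl (bex e) == u) && (inr (bey e) == v)) ||
  ((inl (bex e) == v) && (inr (bey e) == u)).

Definition degS (G : bigraph) (S : {set bE G}) (v : vtx G) : nat :=
  #|[set e in S | incid e v]|.

Definition deg (G : bigraph) (v : vtx G) : nat := degS [set: bE G] v.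

Definition biregular34 (G : bigraph) : Prop :=
  (forall x : bX G, deg (inl x : vtx G) = 3) /\
  (forall y : bY G, deg (inr y : vtx G) = 4).

Definition adjS (G : bigraph) (S : {set bE G}) : rel (vtx G) :=
  fun u v => [exists e in S, joins e u v].

Definition connectedS (G : bigraph) (S : {set bE G}) : Prop :=
  forall u v : vtx G, connect (adjS S) u v.

Definition two_edge_connected (G : bigraph) : Prop :=
  connectedS [set: bE G] /\ forall e : bE G, connectedS ([set: bE G] :\ e).

(* F is a P_7-factor: the component of (V(G), F) containing any vertex v is a
   path on 7 vertices p_0 ... p_6 (distinct) whose edges are exactly
   f 0, ..., f 5, f i joining p_i and p_{i+1}. *)
Definition P7_factor (G : bigraph) (F : {set bE G}) : Prop :=
  forall v : vtx G,
  exists (p : 7.-tuple (vtx G)) (f : 'I_6 -> bE G),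
    [/\ uniq p, v \in p, injective f,
        (forall i : 'I_6, f i \in F /\
           joins (f i) (tnth p (widen_ord (leqnSn 6) i)) (tnth p (lift ord0 i)))
      & (forall e, e \in F -> has (incid e) p -> exists i, e = f i)].

Definition has_P7_factor (G : bigraph) : Prop := exists F : {set bE G}, P7_factor F.

(* a full 3-regular subgraph: a subgraph (W, S), 3-regular, containing
   every vertex of degree 4 (i.e. every vertex of Y) *)
Definition has_full_3reg_subgraph (G : bigraph) : Prop :=
  exists (W : {set vtx G}) (S : {set bE G}),
    [/\ (forall e, e \in S -> (inl (bex e) : vtx G) \in W /\ (inr (bey e) : vtx G) \in W),
        (forall v, v \in W -> degS S v = 3)
      & (forall y : bY G, (inr y : vtx G) \in W)].

(* The graph G of the theorem, built on the disjoint union of G1 and G2: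
   the edge e1 = a1 b1 is replaced by e1' = a1 b2 and e2 = a2 b2 by
   e2' = a2 b1 (we reuse the names e1, e2 for the new edges e1', e2'). *)
Definition swap_ey (G1 G2 : bigraph) (e1 : bE G1) (e2 : bE G2)
  (e : (bE G1 + bE G2)%type) : (bY G1 + bY G2)%type :=
  match e with
  | inl e => if e == e1 then inr (bey e2) else inl (bey e)
  | inr e => if e == e2 then inl (bey e1) else inr (bey e)
  end.

Definition swap_ex (G1 G2 : bigraph)
  (e : (bE G1 + bE G2)%type) : (bX G1 + bX G2)%type :=
  match e with
  | inl e => inl (bex e)
  | inr e => inr (bex e)
  end.

Definition glue (G1 G2 : bigraph) (e1 : bE G1) (e2 : bE G2) : bigraph :=
  @BiGraph (bX G1 + bX G2)%type (bY G1 + bY G2)%type (bE G1 + bE G2)%type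
           (@swap_ex G1 G2) (swap_ey e1 e2).

(* Main.v *)
Require Import Defs.
From mathcomp Require Import all_boot zify.
Set Implicit Arguments. Unset Strict Implicit. Unset Printing Implicit Defensive.

Lemma degS_sum (G : bigraph) (S : {set bE G}) v :
  degS S v = \sum_e ((e \in S) && incid e v).
Proof.
rewrite /degS -sum1_card big_mkcond /=; apply: eq_bigr => e _; rewrite inE.
by case: (_ && _).
Qed.

Lemma incidX (G : bigraph) (e : bE G) x : incid e (inl x) = (bex e == x).
Proof. by rewrite /incid /= orbF. Qed.

Lemma incidY (G : bigraph) (e : bE G) y : incid e (inr y) = (bey e == y).
Proof. by rewrite /incid /=. Qed.

Lemma sum_eq1 (T : finType) (a : T) : \sum_(x : T) (a == x) = 1.
Proof.
rewrite (bigD1 a) //= eqxx big1 // => x; rewrite eq_sym => /negbTE ->. by [].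
Qed.

Lemma sumX_degS (G : bigraph) (S : {set bE G}) :
  \sum_(x : bX G) degS S (inl x) = #|S|.
Proof.
under eq_bigr do rewrite degS_sum.
rewrite exchange_big /= -sum1_card [RHS]big_mkcond /=; apply: eq_bigr => e _.
case: (e \in S) => /=; last by rewrite big1.
under eq_bigr do rewrite incidX. by rewrite sum_eq1.
Qed.

Lemma sumY_degS (G : bigraph) (S : {set bE G}) :
  \sum_(y : bY G) degS S (inr y) = #|S|.
Proof.
under eq_bigr do rewrite degS_sum.
rewrite exchange_big /= -sum1_card [RHS]big_mkcond /=; apply: eq_bigr => e _.
case: (e \in S) => /=; last by rewrite big1.
under eq_bigr do rewrite incidY. by rewrite sum_eq1.
Qed.

Definition phi1 (G1 G2 : bigraph) (e1 : bE G1) (e2 : bE G2) (u : vtx G1) : vtx (glue e1 e2) :=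
  match u with inl x => inl (inl x) | inr y => inr (inl y) end.
Definition phi2 (G1 G2 : bigraph) (e1 : bE G1) (e2 : bE G2) (u : vtx G2) : vtx (glue e1 e2) :=
  match u with inl x => inl (inr x) | inr y => inr (inr y) end.

Lemma phi1_inj G1 G2 e1 e2 : injective (@phi1 G1 G2 e1 e2).
Proof. by case=> [x|y] [x'|y'] //= [->]. Qed.
Lemma phi2_inj G1 G2 e1 e2 : injective (@phi2 G1 G2 e1 e2).
Proof. by case=> [x|y] [x'|y'] //= [->]. Qed.

Lemma glue_ex1 G1 G2 (e1 : bE G1) (e2 : bE G2) e :
  @bex (glue e1 e2) (inl e) = inl (bex e). Proof. by []. Qed.
Lemma glue_ex2 G1 G2 (e1 : bE G1) (e2 : bE G2) e :
  @bex (glue e1 e2) (inr e) = inr (bex e). Proof. by []. Qed.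
Lemma glue_ey1 G1 G2 (e1 : bE G1) (e2 : bE G2) e : e != e1 ->
  @bey (glue e1 e2) (inl e) = inl (bey e).
Proof. by move=> /negbTE ne; rewrite /= ne. Qed.
Lemma glue_ey2 G1 G2 (e1 : bE G1) (e2 : bE G2) e : e != e2 ->
  @bey (glue e1 e2) (inr e) = inr (bey e).
Proof. by move=> /negbTE ne; rewrite /= ne. Qed.
Lemma glue_ey1' G1 G2 (e1 : bE G1) (e2 : bE G2) :
  @bey (glue e1 e2) (inl e1) = inr (bey e2).
Proof. by rewrite /= eqxx. Qed.
Lemma glue_ey2' G1 G2 (e1 : bE G1) (e2 : bE G2) :
  @bey (glue e1 e2) (inr e2) = inl (bey e1).
Proof. by rewrite /= eqxx. Qed.

Lemma joins_phi1 G1 G2 (e1 : bE G1) (e2 : bE G2) e u v : e != e1 ->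
  joins (G := glue e1 e2) (inl e) (phi1 e1 e2 u) (phi1 e1 e2 v) = joins e u v.
Proof.
move=> ne; rewrite /joins glue_ex1 glue_ey1 //.
change (inl (inl (bex e)) : vtx (glue e1 e2)) with (phi1 e1 e2 (inl (bex e))).
change (inr (inl (bey e)) : vtx (glue e1 e2)) with (phi1 e1 e2 (inr (bey e))).
by rewrite !(inj_eq (@phi1_inj _ _ _ _)).
Qed.
Lemma incid_phi1 G1 G2 (e1 : bE G1) (e2 : bE G2) e u : e != e1 ->
  incid (G := glue e1 e2) (inl e) (phi1 e1 e2 u) = incid e u.
Proof.
move=> ne; rewrite /incid glue_ex1 glue_ey1 //.
change (inl (inl (bex e)) : vtx (glue e1 e2)) with (phi1 e1 e2 (inl (bex e))).
change (inr (inl (bey e)) : vtx (glue e1 e2)) with (phi1 e1 e2 (inr (bey e))).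
by rewrite !(inj_eq (@phi1_inj _ _ _ _)).
Qed.
Lemma joins_phi2 G1 G2 (e1 : bE G1) (e2 : bE G2) e u v : e != e2 ->
  joins (G := glue e1 e2) (inr e) (phi2 e1 e2 u) (phi2 e1 e2 v) = joins e u v.
Proof.
move=> ne; rewrite /joins glue_ex2 glue_ey2 //.
change (inl (inr (bex e)) : vtx (glue e1 e2)) with (phi2 e1 e2 (inl (bex e))).
change (inr (inr (bey e)) : vtx (glue e1 e2)) with (phi2 e1 e2 (inr (bey e))).
by rewrite !(inj_eq (@phi2_inj _ _ _ _)).
Qed.
Lemma incid_phi2 G1 G2 (e1 : bE G1) (e2 : bE G2) e u : e != e2 ->
  incid (G := glue e1 e2) (inr e) (phi2 e1 e2 u) = incid e u.
Proof.
move=> ne; rewrite /incid glue_ex2 glue_ey2 //.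
change (inl (inr (bex e)) : vtx (glue e1 e2)) with (phi2 e1 e2 (inl (bex e))).
change (inr (inr (bey e)) : vtx (glue e1 e2)) with (phi2 e1 e2 (inr (bey e))).
by rewrite !(inj_eq (@phi2_inj _ _ _ _)).
Qed.
Lemma incid_12 G1 G2 (e1 : bE G1) (e2 : bE G2) e u : e != e1 ->
  incid (G := glue e1 e2) (inl e) (phi2 e1 e2 u) = false.
Proof. by move=> ne; rewrite /incid glue_ex1 glue_ey1 //; case: u. Qed.
Lemma incid_21 G1 G2 (e1 : bE G1) (e2 : bE G2) e u : e != e2 ->
  incid (G := glue e1 e2) (inr e) (phi1 e1 e2 u) = false.
Proof. by move=> ne; rewrite /incid glue_ex2 glue_ey2 //; case: u. Qed.
Lemma joins_c1 G1 G2 (e1 : bE G1) (e2 : bE G2) :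
  joins (G := glue e1 e2) (inl e1) (phi1 e1 e2 (inl (bex e1))) (phi2 e1 e2 (inr (bey e2))).
Proof. by rewrite /joins glue_ex1 glue_ey1' /= !eqxx. Qed.
Lemma joins_c2 G1 G2 (e1 : bE G1) (e2 : bE G2) :
  joins (G := glue e1 e2) (inr e2) (phi2 e1 e2 (inl (bex e2))) (phi1 e1 e2 (inr (bey e1))).
Proof. by rewrite /joins glue_ex2 glue_ey2' /= !eqxx. Qed.

Lemma degS_glue G1 G2 (e1 : bE G1) (e2 : bE G2) (S : {set bE (glue e1 e2)}) v :
  degS S v = \sum_(e : bE G1) ((inl e \in S) && incid (G := glue e1 e2) (inl e) v)
           + \sum_(e : bE G2) ((inr e \in S) && incid (G := glue e1 e2) (inr e) v).
Proof. by rewrite degS_sum big_sumType. Qed.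

Lemma degX1 G1 G2 (e1 : bE G1) (e2 : bE G2) (S : {set bE (glue e1 e2)}) x :
  degS S (phi1 e1 e2 (inl x)) = degS [set e | inl e \in S] (inl x).
Proof.
rewrite degS_glue degS_sum [X in _ + X]big1 ?addn0; last first.
  by move=> e _; rewrite /incid /= andbF.
by apply: eq_bigr => e _; rewrite inE /incid /= !orbF.
Qed.

Lemma degX2 G1 G2 (e1 : bE G1) (e2 : bE G2) (S : {set bE (glue e1 e2)}) x :
  degS S (phi2 e1 e2 (inl x)) = degS [set e | inr e \in S] (inl x).
Proof.
rewrite degS_glue degS_sum [X in X + _]big1 ?add0n; last first.
  by move=> e _; rewrite /incid /= andbF.
by apply: eq_bigr => e _; rewrite inE /incid /= !orbF.
Qed.

Lemma degY1 G1 G2 (e1 : bE G1) (e2 : bE G2) (S : {set bE (glue e1 e2)}) y :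
  degS S (phi1 e1 e2 (inr y)) + ((inl e1 \in S) && (bey e1 == y)) =
  degS [set e | inl e \in S] (inr y) + ((inr e2 \in S) && (bey e1 == y)).
Proof.
rewrite degS_glue degS_sum (bigD1 e1) // (bigD1 e2) // (bigD1 e1 (P := xpredT)) //.
rewrite [X in _ + (_ + X)]big1; last first.
  by move=> e ne; rewrite incid_21 ?andbF.
have -> : incid (G := glue e1 e2) (inl e1) (phi1 e1 e2 (inr y)) = false.
  by rewrite /incid glue_ey1'.
have -> : incid (G := glue e1 e2) (inr e2) (phi1 e1 e2 (inr y)) = (bey e1 == y).
  by rewrite /incid glue_ey2' /=.
under [in RHS]eq_bigr => e /andP[_ ne].
  rewrite inE -(@incid_phi1 _ _ e1 e2 e (inr y) ne). over.
rewrite inE incidY.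
rewrite andbF /=; lia.
Qed.

Lemma degY2 G1 G2 (e1 : bE G1) (e2 : bE G2) (S : {set bE (glue e1 e2)}) y :
  degS S (phi2 e1 e2 (inr y)) + ((inr e2 \in S) && (bey e2 == y)) =
  degS [set e | inr e \in S] (inr y) + ((inl e1 \in S) && (bey e2 == y)).
Proof.
rewrite degS_glue degS_sum (bigD1 e1) // (bigD1 e2) // (bigD1 e2 (P := xpredT)) //.
rewrite [\sum_(i | true && (i != e1)) _]big1; last first.
  by move=> e ne; rewrite incid_12 ?andbF.
have -> : incid (G := glue e1 e2) (inl e1) (phi2 e1 e2 (inr y)) = (bey e2 == y).
  by rewrite /incid glue_ey1' /=.
have -> : incid (G := glue e1 e2) (inr e2) (phi2 e1 e2 (inr y)) = false.
  by rewrite /incid glue_ey2'.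
under [in RHS]eq_bigr => e /andP[_ ne].
  rewrite inE -(@incid_phi2 _ _ e1 e2 e (inr y) ne). over.
rewrite inE incidY.
rewrite andbF /=; lia.
Qed.

Lemma P7_side1 G1 G2 (e1 : bE G1) (e2 : bE G2) (F1 : {set bE G1})
  (F : {set bE (glue e1 e2)}) :
  P7_factor F1 -> e1 \notin F1 ->
  (forall e, (inl e \in F) = (e \in F1)) -> (forall e, inr e \in F -> e != e2) ->
  forall u, exists (p : 7.-tuple (vtx (glue e1 e2))) (f : 'I_6 -> bE (glue e1 e2)),
    [/\ uniq p, phi1 e1 e2 u \in p, injective f,
        (forall i : 'I_6, f i \in F /\
           joins (f i) (tnth p (widen_ord (leqnSn 6) i)) (tnth p (lift ord0 i)))
      & (forall e, e \in F -> has (incid e) p -> exists i, e = f i)].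
Proof.
move=> P7 ne1 hF1 hF2 u.
have [p [f [up inp finj fF fall]]] := P7 u.
have fne : forall i, f i != e1.
  by move=> i; apply: contraNneq ne1 => <-; case: (fF i).
exists (map_tuple (phi1 e1 e2) p), (fun i => inl (f i)); split.
- by rewrite map_inj_uniq //; apply: phi1_inj.
- by apply: map_f.
- by move=> i j [] /finj.
- move=> i; rewrite hF1 !tnth_map joins_phi1 //; exact: fF i.
- case=> e.
  + rewrite hF1 => eF /=; rewrite has_map.
    have ne : e != e1 by apply: contraNneq ne1 => <-.
    rewrite (eq_has (a2 := incid e)); last by move=> w /=; rewrite incid_phi1.
    by move=> /(fall _ eF) [i ->]; exists i.
  + move=> /hF2 ne /=; rewrite has_map (eq_has (a2 := pred0)) ?has_pred0 //.
    by move=> w /=; rewrite incid_21.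
Qed.

Lemma P7_side2 G1 G2 (e1 : bE G1) (e2 : bE G2) (F2 : {set bE G2})
  (F : {set bE (glue e1 e2)}) :
  P7_factor F2 -> e2 \notin F2 ->
  (forall e, (inr e \in F) = (e \in F2)) -> (forall e, inl e \in F -> e != e1) ->
  forall u, exists (p : 7.-tuple (vtx (glue e1 e2))) (f : 'I_6 -> bE (glue e1 e2)),
    [/\ uniq p, phi2 e1 e2 u \in p, injective f,
        (forall i : 'I_6, f i \in F /\
           joins (f i) (tnth p (widen_ord (leqnSn 6) i)) (tnth p (lift ord0 i)))
      & (forall e, e \in F -> has (incid e) p -> exists i, e = f i)].
Proof.
move=> P7 ne2 hF2 hF1 u.
have [p [f [up inp finj fF fall]]] := P7 u.
have fne : forall i, f i != e2.
  by move=> i; apply: contraNneq ne2 => <-; case: (fF i).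
exists (map_tuple (phi2 e1 e2) p), (fun i => inr (f i)); split.
- by rewrite map_inj_uniq //; apply: phi2_inj.
- by apply: map_f.
- by move=> i j [] /finj.
- move=> i; rewrite hF2 !tnth_map joins_phi2 //; exact: fF i.
- case=> e.
  + move=> /hF1 ne /=; rewrite has_map (eq_has (a2 := pred0)) ?has_pred0 //.
    by move=> w /=; rewrite incid_12.
  + rewrite hF2 => eF /=; rewrite has_map.
    have ne : e != e2 by apply: contraNneq ne2 => <-.
    rewrite (eq_has (a2 := incid e)); last by move=> w /=; rewrite incid_phi2.
    by move=> /(fall _ eF) [i ->]; exists i.
Qed.

Lemma vtx_cases G1 G2 (e1 : bE G1) (e2 : bE G2) (v : vtx (glue e1 e2)) :
  (exists u, v = phi1 e1 e2 u) \/ (exists u, v = phi2 e1 e2 u).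
Proof.
case: v => [[x|x]|[y|y]].
- by left; exists (inl x).
- by right; exists (inl x).
- by left; exists (inr y).
- by right; exists (inr y).
Qed.

Lemma glue_P7 G1 G2 (e1 : bE G1) (e2 : bE G2) (F1 : {set bE G1}) (F2 : {set bE G2}) :
  P7_factor F1 -> e1 \notin F1 -> P7_factor F2 -> e2 \notin F2 ->
  has_P7_factor (glue e1 e2).
Proof.
move=> P1 n1 P2 n2.
exists [set e : bE (glue e1 e2) | match e with inl e => e \in F1 | inr e => e \in F2 end].
move=> v; case: (vtx_cases v) => [[u ->]|[u ->]].
- apply: P7_side1 => // e; rewrite inE //.
  by apply: contraTneq => ->.
- apply: P7_side2 => // e; rewrite inE //.
  by apply: contraTneq => ->.
Qed.

Lemma connect_map (T T' : finType) (f : T -> T') (e : rel T) (e' : rel T') :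
  (forall x y, e x y -> e' (f x) (f y)) ->
  forall x y, connect e x y -> connect e' (f x) (f y).
Proof.
move=> H x y /connectP [p pth ->].
elim: p x pth => [|z p IH] x /=; first by [].
case/andP => exz pz; exact: connect_trans (connect1 (H _ _ exz)) (IH _ pz).
Qed.

Lemma joinsC (G : bigraph) (e : bE G) u v : joins e u v = joins e v u.
Proof. by rewrite /joins orbC. Qed.

Lemma adjS_sym (G : bigraph) (S : {set bE G}) : connect_sym (adjS S).
Proof.
apply: sym_connect_sym => u v; rewrite /adjS.
by apply/existsP/existsP => [] [f /andP [fS jf]]; exists f; rewrite fS joinsC.
Qed.

Lemma cut_edge (G : bigraph) (S : {set bE G}) (d : bE G) : connectedS S ->
  forall u, connect (adjS (S :\ d)) u (inl (bex d)) \/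
            connect (adjS (S :\ d)) u (inr (bey d)).
Proof.
move=> c u; have /connectP [p pth lst] := c u (inl (bex d)).
elim: p u pth lst => [|z p IH] u /=.
  by move=> _ ->; left; exact: connect0.
case/andP => /existsP [f /andP [fS jf]] pz lst.
case: (eqVneq f d) => [fd | fnd].
  subst f; move: jf; rewrite /joins.
  case/orP => /andP [] /eqP e1' /eqP e2'.
    by left; rewrite -e1'; exact: connect0.
  by right; rewrite -e2'; exact: connect0.
have a : adjS (S :\ d) u z by apply/existsP; exists f; rewrite !inE fnd fS jf.
by case: (IH z pz lst) => H; [left|right]; exact: connect_trans (connect1 a) H.
Qed.

Lemma lift1 G1 G2 (e1 : bE G1) (e2 : bE G2) (T1 : {set bE G1}) (T : {set bE (glue e1 e2)}) :
  (forall e, e \in T1 -> e != e1 /\ inl e \in T) ->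
  forall u v, connect (adjS T1) u v -> connect (adjS T) (phi1 e1 e2 u) (phi1 e1 e2 v).
Proof.
move=> H; apply: connect_map => x y /existsP [f /andP [fT jf]].
have [ne fT'] := H f fT.
by apply/existsP; exists (inl f); rewrite fT' joins_phi1.
Qed.

Lemma lift2 G1 G2 (e1 : bE G1) (e2 : bE G2) (T2 : {set bE G2}) (T : {set bE (glue e1 e2)}) :
  (forall e, e \in T2 -> e != e2 /\ inr e \in T) ->
  forall u v, connect (adjS T2) u v -> connect (adjS T) (phi2 e1 e2 u) (phi2 e1 e2 v).
Proof.
move=> H; apply: connect_map => x y /existsP [f /andP [fT jf]].
have [ne fT'] := H f fT.
by apply/existsP; exists (inr f); rewrite fT' joins_phi2.
Qed.

Lemma adj1 (G : bigraph) (S : {set bE G}) e u v : e \in S -> joins e u v -> connect (adjS S) u v.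
Proof. by move=> eS j; apply: connect1; apply/existsP; exists e; rewrite eS. Qed.

Lemma to_root (G : bigraph) (S : {set bE G}) (r : vtx G) :
  (forall u, connect (adjS S) u r) -> connectedS S.
Proof.
move=> H u v; apply: connect_trans (H u) _.
by rewrite adjS_sym; apply: H.
Qed.

Lemma glue_2ec G1 G2 (e1 : bE G1) (e2 : bE G2) :
  two_edge_connected G1 -> two_edge_connected G2 -> two_edge_connected (glue e1 e2).
Proof.
move=> [c1 c1'] [c2 c2'].
have key : forall d, connectedS ([set: bE (glue e1 e2)] :\ d).
  case=> e.
  - apply: (@to_root _ _ (phi2 e1 e2 (inl (bex e2)))) => v.
    have side2 : forall u, connect (adjS ([set: bE (glue e1 e2)] :\ inl e)) (phi2 e1 e2 u) (phi2 e1 e2 (inl (bex e2))).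
      move=> u; apply: lift2 (c2' e2 _ _) => f; rewrite !inE andbT => ->; by [].
    have b1r : connect (adjS ([set: bE (glue e1 e2)] :\ inl e)) (phi1 e1 e2 (inr (bey e1))) (phi2 e1 e2 (inl (bex e2))).
      by apply: (@adj1 (glue e1 e2) _ (inr e2)); [rewrite !inE | rewrite joinsC joins_c2].
    case: (vtx_cases v) => [[u ->]|[u ->]]; last exact: side2.
    case: (eqVneq e e1) => [ee | ne]; first subst e.
      apply: (connect_trans _ b1r); apply: lift1 (c1' e1 _ _) => f.
      by rewrite !inE andbT => ->.
    case: (cut_edge e1 (c1' e) u) => H; last first.
      apply: (connect_trans _ b1r); apply: lift1 H => f.
      by rewrite !inE andbT => /andP [-> fe]; split=> //; rewrite (inj_eq (@inl_inj _ _)).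
    apply: connect_trans (lift1 _ H) _.
      by move=> f; rewrite !inE andbT => /andP [-> fe]; split=> //; rewrite (inj_eq (@inl_inj _ _)).
    apply: connect_trans (side2 (inr (bey e2))).
    apply: (@adj1 (glue e1 e2) _ (inl e1)); last exact: joins_c1.
    by rewrite !inE (inj_eq (@inl_inj _ _)) eq_sym ne.
  - apply: (@to_root _ _ (phi1 e1 e2 (inl (bex e1)))) => v.
    have side1 : forall u, connect (adjS ([set: bE (glue e1 e2)] :\ inr e)) (phi1 e1 e2 u) (phi1 e1 e2 (inl (bex e1))).
      move=> u; apply: lift1 (c1' e1 _ _) => f; rewrite !inE andbT => ->; by [].
    have b2r : connect (adjS ([set: bE (glue e1 e2)] :\ inr e)) (phi2 e1 e2 (inr (bey e2))) (phi1 e1 e2 (inl (bex e1))).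
      by apply: (@adj1 (glue e1 e2) _ (inl e1)); [rewrite !inE | rewrite joinsC joins_c1].
    case: (vtx_cases v) => [[u ->]|[u ->]]; first exact: side1.
    case: (eqVneq e e2) => [ee | ne]; first subst e.
      apply: (connect_trans _ b2r); apply: lift2 (c2' e2 _ _) => f.
      by rewrite !inE andbT => ->.
    case: (cut_edge e2 (c2' e) u) => H; last first.
      apply: (connect_trans _ b2r); apply: lift2 H => f.
      by rewrite !inE andbT => /andP [-> fe]; split=> //; rewrite (inj_eq (@inr_inj _ _)).
    apply: connect_trans (lift2 _ H) _.
      by move=> f; rewrite !inE andbT => /andP [-> fe]; split=> //; rewrite (inj_eq (@inr_inj _ _)).
    apply: connect_trans (side1 (inr (bey e1))).
    apply: (@adj1 (glue e1 e2) _ (inr e2)); last exact: joins_c2.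
    by rewrite !inE (inj_eq (@inr_inj _ _)) eq_sym ne.
split=> //.
move=> u v; apply: connect_sub (key (inl e1) u v) => x y /existsP [f /andP [_ jf]].
by apply: connect1; apply/existsP; exists f; rewrite inE jf.
Qed.

Lemma setT_inl G1 G2 (e1 : bE G1) (e2 : bE G2) :
  [set e | inl e \in [set: bE (glue e1 e2)]] = [set: bE G1].
Proof. by apply/setP => e; rewrite !inE. Qed.
Lemma setT_inr G1 G2 (e1 : bE G1) (e2 : bE G2) :
  [set e | inr e \in [set: bE (glue e1 e2)]] = [set: bE G2].
Proof. by apply/setP => e; rewrite !inE. Qed.

Lemma glue_bireg G1 G2 (e1 : bE G1) (e2 : bE G2) :
  biregular34 G1 -> biregular34 G2 -> biregular34 (glue e1 e2).
Proof.
move=> [x1 y1] [x2 y2]; split.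
- case=> x.
  + change (inl (inl x) : vtx (glue e1 e2)) with (phi1 e1 e2 (inl x)).
    rewrite /deg degX1 setT_inl; exact: x1.
  + change (inl (inr x) : vtx (glue e1 e2)) with (phi2 e1 e2 (inl x)).
    rewrite /deg degX2 setT_inr; exact: x2.
- case=> y.
  + change (inr (inl y) : vtx (glue e1 e2)) with (phi1 e1 e2 (inr y)).
    have := degY1 [set: bE (glue e1 e2)] y; rewrite !inE setT_inl.
    move/addIn; rewrite /deg => ->; exact: y1.
  + change (inr (inr y) : vtx (glue e1 e2)) with (phi2 e1 e2 (inr y)).
    have := degY2 [set: bE (glue e1 e2)] y; rewrite !inE setT_inr.
    move/addIn; rewrite /deg => ->; exact: y2.
Qed.

Lemma sum_ind (T : finType) (b : bool) (a : T) : \sum_(x : T) (b && (a == x)) = b.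
Proof. by case: b; [apply: sum_eq1 | rewrite big1]. Qed.

Lemma glue_nofull G1 G2 (e1 : bE G1) (e2 : bE G2) :
  ~ has_full_3reg_subgraph G1 -> ~ has_full_3reg_subgraph (glue e1 e2).
Proof.
move=> nf [W [S [hE hD hY]]]; apply: nf.
pose W1 := [set u | phi1 e1 e2 u \in W].
pose S1 := [set e | inl e \in S].
have hE1 : forall e, e \in S1 -> (inl (bex e) : vtx G1) \in W1.
  by move=> e; rewrite !inE => /hE [].
have hY1 : forall y, (inr y : vtx G1) \in W1.
  by move=> y; rewrite inE; apply: hY.
have dX : forall x, degS S1 (inl x) = if (inl x : vtx G1) \in W1 then 3 else 0.
  move=> x; case: ifP => xW.
    by rewrite -degX1 hD //; move: xW; rewrite inE.
  rewrite degS_sum big1 // => e _; rewrite incidX.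
  case: (boolP (e \in S1)) => // /hE1; case: (eqVneq (bex e) x) => // ->.
  by rewrite xW.
have d3 : 3 %| #|S1|.
  rewrite -sumX_degS; apply: dvdn_sum => x _; rewrite dX; by case: ifP.
have dY : forall y, degS S1 (inr y) + ((inr e2 \in S) && (bey e1 == y)) =
                    3 + ((inl e1 \in S) && (bey e1 == y)).
  by move=> y; rewrite -degY1 hD //; apply: hY.
have sY := sumY_degS S1.
have : #|S1| + (inr e2 \in S) = 3 * #|bY G1| + (inl e1 \in S).
  rewrite -sY -(sum_ind (inr e2 \in S) (bey e1)) -big_split /=.
  under eq_bigr do rewrite dY.
  by rewrite big_split /= sum_ind sum_nat_const mulnC.
move=> eqn.
have eps : (inl e1 \in S) = (inr e2 \in S).
  move: d3 eqn; case: (inl e1 \in S); case: (inr e2 \in S) => //=; lia.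
exists W1, S1; split => //.
- by move=> e eS; split; [apply: hE1 | apply: hY1].
- case=> [x|y] vW.
  + by rewrite dX vW.
  + by have := dY y; rewrite eps => /addIn.
Qed.

Unset Implicit Arguments.
Theorem mainTheorem3 (G1 G2 : bigraph) (F1 : {set bE G1}) (F2 : {set bE G2})
    (e1 : bE G1) (e2 : bE G2) :
  two_edge_connected G1 -> biregular34 G1 -> P7_factor F1 -> e1 \notin F1 ->
  two_edge_connected G2 -> biregular34 G2 -> P7_factor F2 -> e2 \notin F2 ->
  ~ has_full_3reg_subgraph G1 ->
  [/\ two_edge_connected (glue e1 e2), biregular34 (glue e1 e2),
      has_P7_factor (glue e1 e2) & ~ has_full_3reg_subgraph (glue e1 e2)].
Proof.
move=> c1 b1 p1 n1 c2 b2 p2 n2 nf; split.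
- exact: glue_2ec.
- exact: glue_bireg.
- exact: glue_P7 p1 n1 p2 n2.
- exact: glue_nofull.
Qed.
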